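(* Let $A$ be a deterministic parity tree automaton and $p$ a productive state of $A$. Then there exist a state $q$, a path $\pi_p$ from $p$ to $q$, and two branching paths $\pi_q^0,\pi_q^1$, each leading from $q$ to $q$, such that both $\pi_q^0$ and $\pi_q^1$ are accepting loops.
   Context: Deterministic parity tree automata: total $\delta:Q\times\Sigma\to Q\times Q$, edges $p\xrightarrow{\sigma,d}q$ with direction $d\in\{0,1\}$. A run is accepting if on every path the highest rank occurring infinitely often is even. A state is productive if it occurs in some accepting run (of the automaton from its initial state). A loop is a path returning to its starting state; it is accepting iff the maximal rank on it is even. Two paths from a common state are branching iff they agree on an initial segment of (letter, direction) pairs and then take the same letter in different directions. *)

(* Defs.v *)
From mathcomp Require Import all_boot.
Set Implicit Arguments. Unset Strict Implicit. Unset Printing Implicit Defensive.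

(* A deterministic parity tree automaton over a finite alphabet Sigma:
   finite set of states, an initial state, a total transition function
   delta : Q -> Sigma -> Q * Q (first component = direction 0 = false,
   second component = direction 1 = true) and a rank on states. *)
Record DPTA (Sigma : finType) := {
  state :> finType;
  init : state;
  delta : state -> Sigma -> state * state;
  rank : state -> nat
}.

Section Defs.
Variables (Sigma : finType) (A : DPTA Sigma).

Definition step (p : A) (e : Sigma * bool) : A :=
  if e.2 then (delta p e.1).2 else (delta p e.1).1.

Definition path_end (p : A) (pi : seq (Sigma * bool)) : A := foldl step p pi.

Definition path_states (p : A) (pi : seq (Sigma * bool)) : seq A :=
  scanl step p pi.

Definition path_max_rank (p : A) (pi : seq (Sigma * bool)) : nat :=
  foldr maxn 0 (map (@rank _ A) (p :: path_states p pi)).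

Definition is_loop (q : A) (pi : seq (Sigma * bool)) : Prop :=
  path_end q pi = q.

Definition accepting_loop (q : A) (pi : seq (Sigma * bool)) : Prop :=
  is_loop q pi /\ ~~ odd (path_max_rank q pi).

Definition branching (pi0 pi1 : seq (Sigma * bool)) : Prop :=
  exists (u : seq (Sigma * bool)) (a : Sigma) (d0 d1 : bool)
         (r0 r1 : seq (Sigma * bool)),
    [/\ d0 != d1, pi0 = u ++ (a, d0) :: r0 & pi1 = u ++ (a, d1) :: r1].

Definition tree := seq bool -> Sigma.

Definition tree_path (t : tree) (w : seq bool) : seq (Sigma * bool) :=
  [seq (t (take i w), nth false w i) | i <- iota 0 (size w)].

Definition run (t : tree) (w : seq bool) : A := path_end (init A) (tree_path t w).

Definition parity_ok (f : nat -> nat) : Prop :=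
  exists m, [/\ ~~ odd m,
     (forall N, exists n, N <= n /\ f n = m) &
     (exists N, forall n, N <= n -> f n <= m)].

Definition accepting_run (t : tree) : Prop :=
  forall b : nat -> bool, parity_ok (fun n => rank (run t (mkseq b n))).

Definition productive (p : A) : Prop :=
  exists t : tree, accepting_run t /\ exists w, run t w = p.

End Defs.

(* Main.v *)
Require Import Defs.
From mathcomp Require Import all_boot.
From Stdlib Require Import Classical ClassicalEpsilon.

Section Aux.
Variables (Sigma : finType) (A : DPTA Sigma).

Lemma tree_path_rcons (t : tree Sigma) v d :
  tree_path t (rcons v d) = rcons (tree_path t v) (t v, d).
Proof.
rewrite /tree_path size_rcons -addn1 iotaD map_cat /= add0n cats1.
congr rcons; last by rewrite -cats1 take_size_cat // nth_cat ltnn subnn.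
apply/eq_in_map => i; rewrite mem_iota => /andP[_ hi].
by rewrite -cats1 takel_cat ?(ltnW hi) // nth_cat hi.
Qed.

Lemma run_rcons (t : tree Sigma) v d :
  run A t (rcons v d) = step (run A t v) (t v, d).
Proof. by rewrite /run tree_path_rcons /path_end foldl_rcons. Qed.

Lemma run_ext (t : tree Sigma) w x :
  exists y, run A t (w ++ x) = path_end (run A t w) y.
Proof.
elim/last_ind: x => [|x d [y Hy]]; first by exists [::]; rewrite cats0.
exists (rcons y (t (w ++ x), d)).
by rewrite -rcons_cat run_rcons Hy /path_end foldl_rcons.
Qed.

Fixpoint pre (dir : seq bool -> bool) n : seq bool :=
  if n is n'.+1 then rcons (pre dir n') (dir (pre dir n')) else [::].

Lemma size_pre dir n : size (pre dir n) = n.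
Proof. by elim: n => //= n IH; rewrite size_rcons IH. Qed.

Lemma mkseq_pre dir n : mkseq (fun k => dir (pre dir k)) n = pre dir n.
Proof.
elim: n => //= n IH.
by rewrite /mkseq -addn1 iotaD map_cat /= add0n cats1 -IH.
Qed.

Lemma pre_w dir (w : seq bool) :
  (forall v, size v < size w -> dir v = nth false w (size v)) ->
  forall k, k <= size w -> pre dir k = take k w.
Proof.
move=> Hd; elim=> [|k IH] hk /=; first by rewrite take0.
rewrite IH ?(ltnW hk) // Hd size_take hk //.
by rewrite (take_nth false hk).
Qed.

Lemma pre_ext dir (w : seq bool) :
  (forall v, size v < size w -> dir v = nth false w (size v)) ->
  forall n, size w <= n -> exists x, pre dir n = w ++ x.
Proof.
move=> Hd n hn; rewrite -(subnKC hn); elim: (n - size w) => [|k [x Hx]].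
  by exists [::]; rewrite addn0 cats0 (pre_w _ _ Hd) // take_size.
by exists (rcons x (dir (pre dir (size w + k)))); rewrite addnS /= Hx rcons_cat.
Qed.

Lemma foldr_max_eq (l : seq nat) m :
  (forall x, x \in l -> x <= m) -> m \in l -> foldr maxn 0 l = m.
Proof.
move=> H1 H2; apply/eqP; rewrite eqn_leq; apply/andP; split.
  elim: l H1 {H2} => //= x l IH H1; rewrite geq_max H1 ?mem_head //=.
  by apply: IH => y hy; apply: H1; rewrite in_cons hy orbT.
elim: l H2 {H1} => //= x l IH; rewrite in_cons => /orP[/eqP->|h].
  by rewrite leq_maxl.
by apply: leq_trans (IH h) (leq_maxr _ _).
Qed.

Lemma seg_end (st : nat -> A) e (H : forall k, st k.+1 = step (st k) (e k)) i k :
  path_end (st i) (map e (iota i k)) = st (i + k).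
Proof.
elim: k i => [|k IH] i /=; first by rewrite addn0.
by rewrite /path_end /= -H -addSnnS; apply: IH.
Qed.

Lemma seg_states (st : nat -> A) e (H : forall k, st k.+1 = step (st k) (e k)) i k :
  path_states (st i) (map e (iota i k)) = map st (iota i.+1 k).
Proof.
elim: k i => //= k IH i; rewrite /path_states /= -H; congr cons; exact: IH.
Qed.

End Aux.

Theorem lemma12p1 (Sigma : finType) (A : DPTA Sigma) (p : A) :
  productive p ->
  exists (q : A) (pi_p pi0 pi1 : seq (Sigma * bool)),
    [/\ path_end p pi_p = q, branching pi0 pi1,
        accepting_loop q pi0 & accepting_loop q pi1].
Proof.
move=> [t [Hacc [w Hw]]].
apply: NNPP => Hno.
pose P v d := exists r, accepting_loop (run A t v) ((t v, d) :: r).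
have Hboth : forall v, (exists x, v = w ++ x) -> P v false -> P v true -> False.
  move=> v [x ->] [r0 H0] [r1 H1]; apply: Hno.
  have [y Hy] := @run_ext _ A t w x.
  exists (run A t (w ++ x)), y, ((t (w ++ x), false) :: r0), ((t (w ++ x), true) :: r1).
  split => //; first by rewrite -Hw Hy.
  by exists [::], (t (w ++ x)), false, true, r0, r1.
pose c v := if excluded_middle_informative (P v false) then true else false.
have Hc : forall v, (exists x, v = w ++ x) -> ~ P v (c v).
  move=> v hv; rewrite /c; case: excluded_middle_informative => h //.
  by move=> h'; exact: Hboth hv h h'.
pose dir v := if size v < size w then nth false w (size v) else c v.
have Hd : forall v, size v < size w -> dir v = nth false w (size v).
  by move=> v h; rewrite /dir h.
pose st k := run A t (pre dir k).
pose e k := (t (pre dir k), dir (pre dir k)).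
have Hst : forall k, st k.+1 = step (st k) (e k).
  by move=> k; rewrite /st /= run_rcons.
have [m [Hm Hinf [N0 HN0]]] := Hacc (fun k => dir (pre dir k)).
have Hinf' : forall N, exists n, N <= n /\ rank (st n) = m.
  by move=> N; have [n [h1 h2]] := Hinf N; exists n; rewrite /st -mkseq_pre.
have HN0' : forall n, N0 <= n -> rank (st n) <= m.
  by move=> n hn; rewrite /st -mkseq_pre; apply: HN0.
pose K := maxn N0 (size w).
pose nx N := proj1_sig (constructive_indefinite_description _ (Hinf' N)).
have Hnx : forall N, N <= nx N /\ rank (st (nx N)) = m.
  by move=> N; exact: (proj2_sig (constructive_indefinite_description _ (Hinf' N))).
pose s := fix s k := if k is k'.+1 then nx (s k').+1 else nx K.
have Hs1 : forall k, K <= s k /\ rank (st (s k)) = m.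
  elim=> [|k [IH1 IH2]] /=; first exact: Hnx.
  have [h1 h2] := Hnx (s k).+1; split => //.
  by apply: leq_trans IH1 (leq_trans (leqnSn _) h1).
have Hs2 : forall i j, i < j -> s i < s j.
  move=> i; elim=> // j IH; rewrite ltnS leq_eqVlt => /orP[/eqP->|h] /=.
    by have [h1 _] := Hnx (s j).+1.
  have [h1 _] := Hnx (s j).+1.
  by apply: ltn_trans (IH h) h1.
have key : forall i j, i < j -> st (s i) = st (s j) -> False.
  move=> i j hij heq.
  have ha := Hs2 _ _ hij.
  set a := s i in heq ha.
  have [Ka Ra] := Hs1 i; rewrite -/a in Ka Ra.
  have hwa : size w <= a by apply: leq_trans Ka; rewrite leq_maxr.
  have hNa : N0 <= a by apply: leq_trans Ka; rewrite leq_maxl.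
  have [k Hk] : exists k, s j = a + k.+1.
    by exists (s j - a).-1; rewrite prednK ?subn_gt0 // subnKC // ltnW.
  have Hdir : dir (pre dir a) = c (pre dir a).
    by rewrite /dir size_pre ltnNge hwa.
  apply: (Hc (pre dir a)); first exact: pre_ext.
  exists (map e (iota a.+1 k)).
  have Eseg : (t (pre dir a), c (pre dir a)) :: map e (iota a.+1 k)
              = map e (iota a k.+1) by rewrite /= /e Hdir.
  rewrite Eseg -/(st a); split.
    by rewrite /is_loop (seg_end _ _ _ _ Hst) -Hk heq.
  rewrite /path_max_rank (seg_states _ _ _ _ Hst) (@foldr_max_eq _ m) //.
    move=> x /mapP [y hy ->]; move: hy; rewrite in_cons => /orP[/eqP->|]; first by rewrite Ra.
    move/mapP => [n]; rewrite mem_iota => /andP[hn _] ->.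
    by apply: HN0'; apply: leq_trans hNa (ltnW hn).
  by apply/mapP; exists (st a); rewrite ?mem_head.
pose g (i : 'I_(#|A|.+1)) := st (s i).
have : ~ injective g.
  by move/leq_card; rewrite card_ord ltnn.
move/not_all_ex_not => [i]; move/not_all_ex_not => [j] Hj; have [Heq Hne] := imply_to_and _ _ Hj.
rewrite /g in Heq.
have [lt|gt|eq] := ltngtP i j.
- exact: key lt Heq.
- exact: key gt (esym Heq).
- by apply: Hne; apply: val_inj.
Qed.
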